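(* If $Y$ is a dense subspace of a Tychonoff space $X$, then $|C(X)|\leq nw(Y)^{Nag(Y)}$ and $w(X)\leq nw(Y)^{Nag(Y)}$.
   Context: All spaces are Tychonoff; cardinal invariants take infinite values. $C(X)$ is the set of continuous real-valued functions on $X$; $nw$ is network weight, $w$ weight. The Nagami number $Nag(Y)$ is the minimal cardinality of a family $\mathcal F$ of closed subsets of $\beta Y$ such that for every $y\in Y$ and $z\in\beta Y\setminus Y$ there is $F\in\mathcal F$ with $y\in F$, $z\notin F$. *)

(* Defs.v *)
From Stdlib Require Import Reals List.
Open Scope R_scope.

Record topology (X : Type) := Topology {
  is_open : (X -> Prop) -> Prop;
  open_full : is_open (fun _ => True);
  open_inter : forall U V, is_open U -> is_open V -> is_open (fun x => U x /\ V x);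
  open_union : forall F : (X -> Prop) -> Prop,
      (forall U, F U -> is_open U) -> is_open (fun x => exists U, F U /\ U x)
}.
Arguments is_open {X} t U.

Definition is_closed {X : Type} (t : topology X) (F : X -> Prop) : Prop :=
  is_open t (fun x => ~ F x).

Definition R_open (U : R -> Prop) : Prop :=
  forall x, U x -> exists eps, eps > 0 /\ forall y, Rabs (y - x) < eps -> U y.

Definition continuous_R {X : Type} (t : topology X) (f : X -> R) : Prop :=
  forall U, R_open U -> is_open t (fun x => U (f x)).

Definition continuous {X Z : Type} (tX : topology X) (tZ : topology Z) (f : X -> Z) : Prop :=
  forall U, is_open tZ U -> is_open tX (fun x => U (f x)).

Definition CX {X : Type} (t : topology X) : Type := { f : X -> R | continuous_R t f }.

Definition T1 {X : Type} (t : topology X) : Prop :=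
  forall x : X, is_closed t (fun y => y = x).

Definition completely_regular {X : Type} (t : topology X) : Prop :=
  forall (x : X) (F : X -> Prop), is_closed t F -> ~ F x ->
    exists f : X -> R, continuous_R t f /\ (forall y, 0 <= f y <= 1) /\
      f x = 0 /\ (forall y, F y -> f y = 1).

Definition tychonoff {X : Type} (t : topology X) : Prop := T1 t /\ completely_regular t.

Definition hausdorff {X : Type} (t : topology X) : Prop :=
  forall x y : X, x <> y -> exists U V, is_open t U /\ is_open t V /\ U x /\ V y /\
    (forall z, ~ (U z /\ V z)).

Definition compact {X : Type} (t : topology X) : Prop :=
  forall F : (X -> Prop) -> Prop, (forall U, F U -> is_open t U) ->
    (forall x, exists U, F U /\ U x) ->
    exists l : list (X -> Prop), (forall U, In U l -> F U) /\
      (forall x, exists U, In U l /\ U x).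

Definition dense {X : Type} (t : topology X) (Y : X -> Prop) : Prop :=
  forall U, is_open t U -> (exists x, U x) -> exists y, Y y /\ U y.

Definition subspace_open {X : Type} (t : topology X) (Y : X -> Prop)
  (V : {x | Y x} -> Prop) : Prop :=
  exists U, is_open t U /\ forall y : {x | Y x}, V y <-> U (proj1_sig y).

Lemma subspace_full {X : Type} (t : topology X) (Y : X -> Prop) :
  subspace_open t Y (fun _ => True).
Proof. exists (fun _ => True); split; [apply open_full | tauto]. Qed.

Lemma subspace_inter {X : Type} (t : topology X) (Y : X -> Prop) U V :
  subspace_open t Y U -> subspace_open t Y V -> subspace_open t Y (fun x => U x /\ V x).
Proof.
  intros [U' [HU HU']] [V' [HV HV']].
  exists (fun x => U' x /\ V' x); split; [apply open_inter; auto|].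
  intro y; rewrite HU', HV'; tauto.
Qed.

Lemma subspace_union {X : Type} (t : topology X) (Y : X -> Prop)
  (F : ({x | Y x} -> Prop) -> Prop) :
  (forall U, F U -> subspace_open t Y U) ->
  subspace_open t Y (fun x => exists U, F U /\ U x).
Proof.
  intros H.
  exists (fun x => exists W, (is_open t W /\ exists U, F U /\
            forall y : {x | Y x}, U y <-> W (proj1_sig y)) /\ W x).
  split.
  - apply open_union. intros W [HW _]; exact HW.
  - intros y; split.
    + intros [U [HFU HUy]]. destruct (H U HFU) as [W [HW HW']].
      exists W; split; [split; [exact HW | exists U; split; assumption] | apply HW'; exact HUy].
    + intros [W [[HW [U [HFU HUW]]] HWy]]. exists U; split; [assumption | apply HUW; exact HWy].
Qed.

Definition subspace {X : Type} (t : topology X) (Y : X -> Prop) : topology {x | Y x} :=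
  Topology _ (subspace_open t Y) (subspace_full t Y) (subspace_inter t Y) (subspace_union t Y).

Definition network {X N : Type} (t : topology X) (Nw : N -> X -> Prop) : Prop :=
  forall U x, is_open t U -> U x -> exists n, Nw n x /\ forall y, Nw n y -> U y.

Definition base {X B : Type} (t : topology X) (Bs : B -> X -> Prop) : Prop :=
  (forall i, is_open t (Bs i)) /\
  (forall U x, is_open t U -> U x -> exists i, Bs i x /\ forall y, Bs i y -> U y).

Definition infinite_type (T : Type) : Prop := exists g : nat -> T, forall m n, g m = g n -> m = n.

Definition stone_cech {Y Z : Type} (tY : topology Y) (tZ : topology Z) (e : Y -> Z) : Prop :=
  compact tZ /\ hausdorff tZ /\
  (forall a b, e a = e b -> a = b) /\
  continuous tY tZ e /\
  (forall V, is_open tY V -> exists U, is_open tZ U /\ forall y, V y <-> U (e y)) /\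
  dense tZ (fun z => exists y, e y = z) /\
  (forall f : Y -> R, continuous_R tY f -> (exists M, forall y, Rabs (f y) <= M) ->
     exists g : Z -> R, continuous_R tZ g /\ forall y, g (e y) = f y).

Definition nagami_family {Y Z K : Type} (tZ : topology Z) (e : Y -> Z) (Fam : K -> Z -> Prop) : Prop :=
  (forall k, is_closed tZ (Fam k)) /\
  (forall (y : Y) (z : Z), (~ exists y', e y' = z) -> exists k, Fam k (e y) /\ ~ Fam k z).

(* Main.v *)
Require Import Defs.
From Stdlib Require Import Reals List ClassicalEpsilon Classical FunctionalExtensionality PropExtensionality ProofIrrelevance Lra Lia ZArith.
From Stdlib Require Cantor.
From mathcomp Require boolp classical_sets.
Open Scope R_scope.


Lemma zorn_pre (T : Type) (t0 : T) (R : T -> T -> Prop) :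
  (forall t, R t t) -> (forall r s t, R r s -> R s t -> R r t) ->
  (forall A : T -> Prop, (forall s t, A s -> A t -> R s t \/ R t s) -> exists t, forall s, A s -> R s t) ->
  exists t, forall s, R t s -> R s t.
Proof.
  intros Hr Ht Hc.
  pose (Rb := fun a b => boolp.asbool (R a b)).
  assert (E : forall a b, Rb a b = true <-> R a b).
  { intros a b; unfold Rb. destruct (boolp.asboolP (R a b)); split; auto; discriminate. }
  destruct (@classical_sets.ZL_preorder T t0 Rb) as [t Hm].
  - intro t; apply E; auto.
  - intros r s u H1 H2; apply E; apply E in H1; apply E in H2; eauto.
  - intros A HA. destruct (Hc A) as [t Ht'].
    + intros s u Hs Hu. destruct (HA s u Hs Hu) as [H|H]; [left|right]; apply E; exact H.
    + exists t; intros s Hs; apply E; auto.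
  - exists t; intros s Hs. apply E. apply Hm. apply E. exact Hs.
Qed.

Definition injective {A B} (f : A -> B) := forall x y, f x = f y -> x = y.

Definition choose {A} (P : A -> Prop) (H : exists x, P x) : A :=
  proj1_sig (constructive_indefinite_description P H).
Lemma choose_spec {A} (P : A -> Prop) H : P (@choose A P H).
Proof. unfold choose; destruct constructive_indefinite_description; auto. Qed.

Section Compar.
Variables A B : Type.
Variable b0 : B.

Definition cobj := { p : (A -> Prop) * (A -> B) |
   forall x y, fst p x -> fst p y -> snd p x = snd p y -> x = y }.
Definition cD (o : cobj) := fst (proj1_sig o).
Definition ch (o : cobj) := snd (proj1_sig o).
Definition cR (o o' : cobj) := (forall a, cD o a -> cD o' a) /\ (forall a, cD o a -> ch o' a = ch o a).

Lemma compar_aux : exists o : cobj, forall s, cR o s -> cR s o.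
Proof.
  assert (t0 : cobj).
  { exists ((fun _ => False), (fun _ => b0)); simpl; tauto. }
  apply (@zorn_pre cobj t0 cR).
  - intro t; split; auto.
  - intros r s t [H1 H2] [H3 H4]; split; auto.
    intros a Ha. rewrite H4 by auto. auto.
  - intros Ch Htot.
    set (Ds := fun a => exists o, Ch o /\ cD o a).
    set (hs := fun a => match excluded_middle_informative (Ds a) with
                        | left H => ch (choose _ H) a | right _ => b0 end).
    assert (Hhs : forall o a, Ch o -> cD o a -> hs a = ch o a).
    { intros o a Ho Ha. unfold hs. destruct excluded_middle_informative as [H|H].
      2:{ exfalso; apply H; exists o; auto. }
      destruct (choose_spec _ H) as [Hc1 Hc2].
      destruct (Htot o (choose _ H) Ho Hc1) as [[R1 R2]|[R1 R2]].
      - apply R2; auto.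
      - symmetry; apply R2; auto. }
    assert (Hinj : forall x y, Ds x -> Ds y -> hs x = hs y -> x = y).
    { intros x y [o1 [Ho1 Hx]] [o2 [Ho2 Hy]] E.
      rewrite (Hhs o1 x Ho1 Hx), (Hhs o2 y Ho2 Hy) in E.
      destruct (Htot o1 o2 Ho1 Ho2) as [[R1 R2]|[R1 R2]].
      - rewrite <- (R2 x Hx) in E. exact (proj2_sig o2 x y (R1 x Hx) Hy E).
      - rewrite <- (R2 y Hy) in E. exact (proj2_sig o1 x y Hx (R1 y Hy) E). }
    exists (exist _ (Ds, hs) Hinj).
    intros o Ho; split; simpl.
    + intros a Ha; exists o; auto.
    + intros a Ha. unfold ch at 1; simpl. apply Hhs; auto.
Qed.

Lemma compar_nonempty : (exists f : A -> B, injective f) \/ (exists g : B -> A, injective g).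
Proof.
  destruct compar_aux as [o Ho].
  destruct (classic (forall a, cD o a)) as [Hall|Hn].
  - left; exists (ch o). intros x y E. exact (proj2_sig o x y (Hall x) (Hall y) E).
  - destruct (classic (forall b, exists a, cD o a /\ ch o a = b)) as [Hs|Hs].
    + right. exists (fun b => choose _ (Hs b)).
      intros x y E. pose proof (choose_spec _ (Hs x)) as [_ Ex].
      pose proof (choose_spec _ (Hs y)) as [_ Ey]. rewrite <- Ex, <- Ey, E; auto.
    + exfalso. apply not_all_ex_not in Hn as [a Ha].
      apply not_all_ex_not in Hs as [b Hb].
      set (D' := fun x => cD o x \/ x = a).
      set (h' := fun x => match excluded_middle_informative (x = a) with
                          | left _ => b | right _ => ch o x end).
      assert (Hi : forall x y, D' x -> D' y -> h' x = h' y -> x = y).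
      { intros x y Hx Hy E. unfold h' in E.
        destruct (excluded_middle_informative (x = a)) as [ea|na];
        destruct (excluded_middle_informative (y = a)) as [eb|nb]; subst; auto.
        - exfalso; apply Hb. exists y; split; [destruct Hy; [auto|contradiction]|auto].
        - exfalso; apply Hb. exists x; split; [destruct Hx; [auto|contradiction]|auto].
        - destruct Hx as [Hx|Hx]; [|contradiction]. destruct Hy as [Hy|Hy]; [|contradiction].
          exact (proj2_sig o x y Hx Hy E). }
      set (o' := exist _ (D', h') Hi : cobj).
      assert (R1 : cR o o').
      { split; simpl.
        - intros x Hx; left; exact Hx.
        - intros x Hx. unfold ch; simpl. unfold h'.
          destruct excluded_middle_informative; [subst; contradiction|reflexivity]. }
      destruct (Ho o' R1) as [R2 _]. apply Ha. apply R2. simpl. right; reflexivity.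
Qed.
End Compar.

Lemma comparability (A B : Type) :
  (exists f : A -> B, injective f) \/ (exists g : B -> A, injective g).
Proof.
  destruct (classic (inhabited B)) as [[b0]|Hn].
  - apply compar_nonempty; exact b0.
  - right. exists (fun b => False_rect _ (Hn (inhabits b))).
    intros x; exfalso; apply Hn; exact (inhabits x).
Qed.

Lemma sig_eq {A} {P : A -> Prop} (x y : {a | P a}) : proj1_sig x = proj1_sig y -> x = y.
Proof. destruct x, y; simpl; intros; subst; f_equal; apply proof_irrelevance. Qed.

Section Hess.
Variable T : Type.
Variable g : nat -> T.
Hypothesis gi : injective g.

Definition HInv (B : T -> Prop) (f : T * T -> T) :=
  (forall n, B (g n)) /\ (forall a b, B a -> B b -> B (f (a, b))) /\
  (forall a b a' b', B a -> B b -> B a' -> B b' -> f (a, b) = f (a', b') -> a = a' /\ b = b').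

Definition em_if {P : Prop} {C : Type} (x y : C) : C :=
  match excluded_middle_informative P with left _ => x | right _ => y end.

Section Ext.
Variable B : T -> Prop.
Variable f : T * T -> T.
Hypothesis Hf : HInv B f.
Variable hh : T -> T.
Hypothesis hh_out : forall x, B x -> ~ B (hh x).
Hypothesis hh_inj : forall x y, B x -> B y -> hh x = hh y -> x = y.

Definition B' x := B x \/ exists y, B y /\ hh y = x.
Definition sig_ x := match excluded_middle_informative (exists y, B y /\ hh y = x) with
  | left H => choose _ H | right _ => x end.
Definition sg x := match excluded_middle_informative (B x) with left _ => x | right _ => sig_ x end.
Definition tagn a b := match excluded_middle_informative (B a) with left _ => 0%nat
  | right _ => match excluded_middle_informative (B b) with left _ => 1%nat | right _ => 2%nat end end.
Definition f' (p : T * T) := let (a, b) := p in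
  match excluded_middle_informative (B a /\ B b) with
  | left _ => f (a, b)
  | right _ => hh (f (f (sg a, sg b), g (tagn a b))) end.

Lemma sg_B x : B' x -> B (sg x).
Proof.
  intros Hx. unfold sg. destruct excluded_middle_informative as [H|H]; auto.
  unfold sig_. destruct excluded_middle_informative as [H2|H2].
  - exact (proj1 (choose_spec _ H2)).
  - destruct Hx as [Hx|Hx]; contradiction.
Qed.

Lemma sg_out x : B' x -> ~ B x -> hh (sg x) = x.
Proof.
  intros Hx Hn. unfold sg. destruct excluded_middle_informative as [H|H]; [contradiction|].
  unfold sig_. destruct excluded_middle_informative as [H2|H2].
  - exact (proj2 (choose_spec _ H2)).
  - destruct Hx as [Hx|Hx]; contradiction.
Qed.

Lemma sg_in x : B x -> sg x = x.
Proof. intros H; unfold sg; destruct excluded_middle_informative; [auto|contradiction]. Qed.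

Lemma tagn_spec a b a' b' : ~ (B a /\ B b) -> ~ (B a' /\ B b') -> tagn a b = tagn a' b' ->
  (B a <-> B a') /\ (B b <-> B b').
Proof.
  intros H1 H2. unfold tagn.
  destruct (excluded_middle_informative (B a)); destruct (excluded_middle_informative (B a'));
  try discriminate;
  try (destruct (excluded_middle_informative (B b')); discriminate);
  try (destruct (excluded_middle_informative (B b)); discriminate);
  destruct (excluded_middle_informative (B b)); destruct (excluded_middle_informative (B b'));
  try discriminate; intros _; tauto.
Qed.

Lemma ext_inv : HInv B' f'.
Proof.
  destruct Hf as [Hg [Hcl Hinj]].
  split; [|split].
  - intros n; left; auto.
  - intros a b Ha Hb. unfold f'. destruct excluded_middle_informative as [[Ha' Hb']|H].
    + left; auto.
    + right. eexists; split; [|reflexivity]. apply Hcl; [apply Hcl; apply sg_B; auto| auto].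
  - intros a b a' b' Ha Hb Ha' Hb'. unfold f'.
    assert (HB1 : forall a b, B' a -> B' b -> B (f (f (sg a, sg b), g (tagn a b)))).
    { intros x y Hx Hy. apply Hcl; [apply Hcl; apply sg_B; auto|auto]. }
    destruct (excluded_middle_informative (B a /\ B b)) as [[H1 H2]|H];
    destruct (excluded_middle_informative (B a' /\ B b')) as [[H1' H2']|H'].
    + apply Hinj; auto.
    + intros E. exfalso. apply (hh_out _ (HB1 a' b' Ha' Hb')). rewrite <- E. apply Hcl; auto.
    + intros E. exfalso. apply (hh_out _ (HB1 a b Ha Hb)). rewrite E. apply Hcl; auto.
    + intros E. apply hh_inj in E; try apply HB1; auto.
      apply Hinj in E; try apply Hcl; try apply sg_B; auto.
      destruct E as [E1 E2]. apply gi in E2.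
      apply Hinj in E1; try apply sg_B; auto. destruct E1 as [Ea Eb].
      destruct (tagn_spec a b a' b' H H' E2) as [Ia Ib].
      split.
      * destruct (classic (B a)) as [Hba|Hba].
        -- rewrite (sg_in a Hba), (sg_in a') in Ea by tauto; auto.
        -- rewrite <- (sg_out a Ha Hba), <- (sg_out a' Ha') by tauto. congruence.
      * destruct (classic (B b)) as [Hbb|Hbb].
        -- rewrite (sg_in b Hbb), (sg_in b') in Eb by tauto; auto.
        -- rewrite <- (sg_out b Hb Hbb), <- (sg_out b' Hb') by tauto. congruence.
Qed.

Lemma ext_agree a b : B a -> B b -> f' (a, b) = f (a, b).
Proof. intros Ha Hb. unfold f'. destruct excluded_middle_informative; tauto. Qed.

Lemma ext_strict : ~ (forall x, B' x -> B x).
Proof.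
  intros H. destruct Hf as [Hg _].
  apply (hh_out _ (Hg 0%nat)). apply H. right. exists (g 0%nat); auto.
Qed.
End Ext.

Definition hobj := { p : (T -> Prop) * (T * T -> T) | HInv (fst p) (snd p) }.
Definition hB (o : hobj) := fst (proj1_sig o).
Definition hf (o : hobj) := snd (proj1_sig o).
Definition hR (o o' : hobj) := (forall a, hB o a -> hB o' a) /\
  (forall a b, hB o a -> hB o b -> hf o' (a, b) = hf o (a, b)).

Definition B0 x := exists n, g n = x.
Definition f0 (p : T * T) := let (a, b) := p in
  match excluded_middle_informative (exists nm : nat * nat, g (fst nm) = a /\ g (snd nm) = b) with
  | left H => g (Cantor.to_nat (choose _ H)) | right _ => g 0%nat end.

Lemma f0_inv : HInv B0 f0.
Proof.
  split; [|split].
  - intros n; exists n; auto.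
  - intros a b _ _. unfold f0. destruct excluded_middle_informative; eexists; eauto.
  - intros a b a' b' [n Hn] [m Hm] [n' Hn'] [m' Hm']. unfold f0.
    destruct excluded_middle_informative as [H1|H1]; [|exfalso; apply H1; exists (n,m); simpl; auto].
    destruct excluded_middle_informative as [H2|H2]; [|exfalso; apply H2; exists (n',m'); simpl; auto].
    intros E. apply gi in E.
    pose proof (choose_spec _ H1) as [E1 E2]. pose proof (choose_spec _ H2) as [E3 E4].
    assert (E' := f_equal Cantor.of_nat E). rewrite !Cantor.cancel_of_to in E'.
    set (c1 := choose _ H1) in *. set (c2 := choose _ H2) in *. clearbody c1 c2.
    subst c2. split; congruence.
Qed.

Lemma hess_aux : exists o : hobj, forall s, hR o s -> hR s o.
Proof.
  set (t0 := exist (fun p => HInv (fst p) (snd p)) (B0, f0) f0_inv : hobj).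
  apply (@zorn_pre hobj t0 hR).
  - intro t; split; auto.
  - intros r s t [H1 H2] [H3 H4]; split; auto.
    intros a b Ha Hb. rewrite H4 by auto. auto.
  - intros Ch Htot.
    destruct (classic (exists o, Ch o)) as [[o0 Ho0]|Hne].
    2:{ exists t0. intros s Hs; exfalso; apply Hne; eauto. }
    set (Bs := fun a => exists o, Ch o /\ hB o a).
    set (fs := fun p : T * T => let (a, b) := p in
      match excluded_middle_informative (exists o, Ch o /\ hB o a /\ hB o b) with
      | left H => hf (choose _ H) (a, b) | right _ => g 0%nat end).
    assert (Hcomm : forall o1 o2 a b, Ch o1 -> Ch o2 -> hB o1 a -> hB o2 b ->
              exists o, Ch o /\ hB o a /\ hB o b /\ (forall x, hB o1 x -> hB o x) /\ (forall x, hB o2 x -> hB o x)).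
    { intros o1 o2 a b H1 H2 Ha Hb. destruct (Htot o1 o2 H1 H2) as [[R1 _]|[R1 _]].
      - exists o2; auto. - exists o1; auto. }
    assert (Hfs : forall o a b, Ch o -> hB o a -> hB o b -> fs (a, b) = hf o (a, b)).
    { intros o a b Ho Ha Hb. unfold fs. destruct excluded_middle_informative as [H|H].
      2:{ exfalso; apply H; exists o; auto. }
      destruct (choose_spec _ H) as [Hc1 [Hc2 Hc3]].
      destruct (Htot o (choose _ H) Ho Hc1) as [[R1 R2]|[R1 R2]].
      - apply R2; auto.
      - symmetry; apply R2; auto. }
    assert (Hinv : HInv Bs fs).
    { split; [|split].
      - intros n. exists o0; split; auto. exact (proj1 (proj2_sig o0) n).
      - intros a b [o1 [H1 Ha]] [o2 [H2 Hb]].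
        destruct (Hcomm o1 o2 a b H1 H2 Ha Hb) as [o [Ho [Ha' [Hb' _]]]].
        rewrite (Hfs o a b Ho Ha' Hb'). exists o; split; auto.
        exact (proj1 (proj2 (proj2_sig o)) a b Ha' Hb').
      - intros a b a' b' [o1 [H1 Ha]] [o2 [H2 Hb]] [o3 [H3 Ha']] [o4 [H4 Hb']].
        destruct (Hcomm o1 o2 a b H1 H2 Ha Hb) as [p [Hp [Hpa [Hpb _]]]].
        destruct (Hcomm o3 o4 a' b' H3 H4 Ha' Hb') as [q [Hq [Hqa [Hqb _]]]].
        destruct (Hcomm p q a a' Hp Hq Hpa Hqa) as [r [Hr [_ [_ [Sp Sq]]]]].
        rewrite (Hfs r a b Hr (Sp a Hpa) (Sp b Hpb)), (Hfs r a' b' Hr (Sq a' Hqa) (Sq b' Hqb)).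
        apply (proj2 (proj2 (proj2_sig r))); [apply Sp; exact Hpa|apply Sp; exact Hpb|apply Sq; exact Hqa|apply Sq; exact Hqb]. }
    exists (exist (fun p => HInv (fst p) (snd p)) (Bs, fs) Hinv).
    intros o Ho; split; simpl.
    + intros a Ha; exists o; auto.
    + intros a b Ha Hb. unfold hf at 1; simpl. apply Hfs; auto.
Qed.

Lemma hessenberg : exists p : T * T -> T, injective p.
Proof.
  destruct hess_aux as [o Ho].
  destruct (proj2_sig o) as [Hg [Hcl Hinj]].
  fold (hB o) in Hg, Hcl, Hinj. fold (hf o) in Hcl, Hinj.
  set (B := hB o) in *. set (f := hf o) in *.
  destruct (comparability {x | ~ B x} {x | B x}) as [[h Hh]|[h Hh]].
  - set (u := fun t => match excluded_middle_informative (B t) with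
                  | left _ => f (t, g 0%nat)
                  | right Hn => f (proj1_sig (h (exist _ t Hn)), g 1%nat) end).
    assert (uB : forall t, B (u t)).
    { intros t; unfold u; destruct excluded_middle_informative; apply Hcl; auto.
      apply (proj2_sig (h _)). }
    assert (ui : injective u).
    { intros x y. unfold u.
      destruct (excluded_middle_informative (B x)) as [Hx|Hx];
      destruct (excluded_middle_informative (B y)) as [Hy|Hy]; intros E;
      apply Hinj in E; try apply (proj2_sig (h _)); auto; destruct E as [E1 E2].
      - auto.
      - apply gi in E2; discriminate.
      - apply gi in E2; discriminate.
      - apply sig_eq in E1. apply Hh in E1. apply (f_equal (@proj1_sig _ _)) in E1. exact E1. }
    exists (fun p => f (u (fst p), u (snd p))).
    intros [a b] [a' b'] E. simpl in E. apply Hinj in E; auto. destruct E as [E1 E2].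
    apply ui in E1; apply ui in E2; subst; auto.
  - exfalso.
    set (hh := fun x => match excluded_middle_informative (B x) with
                 | left Hb => proj1_sig (h (exist _ x Hb)) | right _ => x end).
    assert (hh_out : forall x, B x -> ~ B (hh x)).
    { intros x Hx; unfold hh; destruct excluded_middle_informative; [|contradiction].
      apply (proj2_sig (h _)). }
    assert (hh_inj : forall x y, B x -> B y -> hh x = hh y -> x = y).
    { intros x y Hx Hy; unfold hh.
      destruct (excluded_middle_informative (B x)); [|contradiction].
      destruct (excluded_middle_informative (B y)); [|contradiction].
      intros E. apply sig_eq in E. apply Hh in E. apply (f_equal (@proj1_sig _ _)) in E. exact E. }
    assert (HI : HInv B f) by (split; auto).
    pose proof (ext_inv B f HI hh hh_out hh_inj) as HI'.
    set (o' := exist (fun p => HInv (fst p) (snd p)) (B' B hh, f' B f hh) HI' : hobj).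
    assert (R1 : hR o o').
    { split; simpl.
      - intros a Ha; left; exact Ha.
      - intros a b Ha Hb. unfold hf at 1; simpl. apply ext_agree; auto. }
    destruct (Ho o' R1) as [R2 _].
    apply (ext_strict B f HI hh hh_out). exact R2.
Qed.
End Hess.

Section Codes.
Variable T : Type.
Variable g : nat -> T.
Hypothesis gi : injective g.
Variable p : T * T -> T.
Hypothesis pi : injective p.

Definition shift t := match excluded_middle_informative (exists n, g n = t) with
  | left H => g (S (choose _ H)) | right _ => t end.

Lemma shift_inj : injective shift.
Proof.
  intros x y. unfold shift.
  destruct (excluded_middle_informative (exists n, g n = x)) as [Hx|Hx];
  destruct (excluded_middle_informative (exists n, g n = y)) as [Hy|Hy]; intros E.
  - apply gi in E. injection E as E. rewrite <- (choose_spec _ Hx), <- (choose_spec _ Hy), E; auto.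
  - exfalso; apply Hy; eauto.
  - exfalso; apply Hx; eauto.
  - auto.
Qed.

Lemma shift_ne t : shift t <> g 0.
Proof.
  unfold shift. destruct excluded_middle_informative as [H|H]; intros E.
  - apply gi in E; discriminate.
  - apply H; exists 0%nat; auto.
Qed.

Fixpoint lcode (l : list T) : T :=
  match l with nil => g 0 | x :: l' => shift (p (x, lcode l')) end.

Lemma lcode_inj : injective lcode.
Proof.
  intros l; induction l as [|x l IH]; intros [|y l'] E; simpl in E; auto.
  - symmetry in E; apply shift_ne in E; contradiction.
  - apply shift_ne in E; contradiction.
  - apply shift_inj, pi in E. injection E as E1 E2. apply IH in E2. subst; auto.
Qed.

Definition ocode (o : option T) : T := match o with None => g 0 | Some t => shift t end.
Lemma ocode_inj : injective ocode.
Proof.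
  intros [x|] [y|] E; simpl in E; auto.
  - apply shift_inj in E; subst; auto.
  - apply shift_ne in E; contradiction.
  - symmetry in E; apply shift_ne in E; contradiction.
Qed.
End Codes.

Lemma map_inj {A B} (f : A -> B) : injective f -> injective (map f).
Proof.
  intros H l; induction l as [|x l IH]; intros [|y l'] E; simpl in E; try discriminate; auto.
  injection E as E1 E2. apply H in E1; apply IH in E2; subst; auto.
Qed.

Definition zcode (z : Z) : nat := match z with
  | Z0 => 0 | Zpos q => 2 * Pos.to_nat q | Zneg q => 2 * Pos.to_nat q + 1 end.
Lemma zcode_inj : injective zcode.
Proof.
  intros [|a|a] [|b|b]; simpl; intros E; try lia;
  f_equal; apply Pos2Nat.inj; lia.
Qed.

Lemma injective_comp {A B C} (f : B -> C) (h : A -> B) : injective f -> injective h -> injective (fun x => f (h x)).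
Proof. intros Hf Hh x y E; apply Hh, Hf, E. Qed.

Lemma codeK (K : Type) (gK : nat -> K) : injective gK ->
  exists iK : list K * nat -> K, injective iK.
Proof.
  intros gi. destruct (hessenberg K gK gi) as [pK pi].
  exists (fun a => pK (lcode K gK pK (fst a), gK (snd a))).
  intros [l n] [l' n'] E. simpl in E. apply pi in E. injection E as E1 E2.
  apply lcode_inj in E1; auto. apply gi in E2. subst; auto.
Qed.

Lemma codeN (N : Type) (gN : nat -> N) : injective gN ->
  exists iN : option (list (list (N * N) * Z)) -> N, injective iN.
Proof.
  intros gi. destruct (hessenberg N gN gi) as [pN pi].
  set (lc := lcode N gN pN).
  set (c1 := fun lp : list (N * N) => lc (map pN lp)).
  set (c2 := fun d : list (N * N) * Z => pN (c1 (fst d), gN (zcode (snd d)))).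
  exists (fun o => ocode N gN (option_map (fun l => lc (map c2 l)) o)).
  assert (Hc1 : injective c1).
  { unfold c1. apply injective_comp; [apply lcode_inj; auto|apply map_inj; auto]. }
  assert (Hc2 : injective c2).
  { intros [a z] [a' z'] E. unfold c2 in E; simpl in E. apply pi in E. injection E as E1 E2.
    apply Hc1 in E1. apply gi, zcode_inj in E2. subst; auto. }
  intros o o' E. apply ocode_inj in E; auto.
  destruct o, o'; simpl in E; try discriminate; auto.
  injection E as E. apply lcode_inj in E; auto. apply map_inj in E; auto. subst; auto.
Qed.

Lemma lift_fun (A B K N : Type) (iK : A -> K) (iN : B -> N) (n0 : N) :
  injective iK -> injective iN -> exists F : (A -> B) -> (K -> N), injective F.
Proof.
  intros HK HN.
  exists (fun psi k => match excluded_middle_informative (exists a, iK a = k) with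
                       | left H => iN (psi (choose _ H)) | right _ => n0 end).
  intros psi1 psi2 E. apply functional_extensionality. intros a.
  pose proof (f_equal (fun F => F (iK a)) E) as E'. simpl in E'.
  destruct excluded_middle_informative as [H|H]; [|exfalso; apply H; eauto].
  apply HN in E'. pose proof (choose_spec _ H) as Hc. apply HK in Hc. rewrite Hc in E'. exact E'.
Qed.

Lemma open_ext {T} (t : topology T) (U V : T -> Prop) :
  (forall z, U z <-> V z) -> is_open t U -> is_open t V.
Proof.
  intros H HU. replace V with U; auto.
  apply functional_extensionality; intro z; apply propositional_extensionality; auto.
Qed.

Lemma R_open_lin (c a b : R) : 0 < c -> R_open (fun r => Rabs (c * r - a) < b).
Proof.
  intros Hc x Hx. exists ((b - Rabs (c * x - a)) / c). split.
  - apply Rdiv_lt_0_compat; lra.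
  - intros y Hy.
    assert (H1 : Rabs (c * y - a) <= Rabs (c * x - a) + c * Rabs (y - x)).
    { replace (c * y - a) with ((c * x - a) + c * (y - x)) by ring.
      eapply Rle_trans; [apply Rabs_triang|]. rewrite Rabs_mult, (Rabs_right c) by lra. lra. }
    assert (H2 : c * Rabs (y - x) < b - Rabs (c * x - a)).
    { apply (Rmult_lt_compat_l c) in Hy; auto.
      replace (c * ((b - Rabs (c * x - a)) / c)) with (b - Rabs (c * x - a)) in Hy by (field; lra). lra. }
    lra.
Qed.

Lemma R_open_lt (a : R) : R_open (fun r => r < a).
Proof.
  intros x Hx. exists (a - x). split; [lra|].
  intros y Hy. unfold Rabs in Hy; destruct Rcase_abs in Hy; lra.
Qed.

Lemma small_eq (d : R) : (forall j : nat, INR (S j) * Rabs d < 4) -> d = 0.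
Proof.
  intros H. destruct (Req_dec d 0) as [E|E]; auto. exfalso.
  assert (Hd : 0 < Rabs d) by (apply Rabs_pos_lt; auto).
  destruct (archimed_cor1 (Rabs d / 4)) as [n [Hn1 Hn2]]; [lra|].
  destruct n as [|j]; [inversion Hn2|].
  specialize (H j).
  assert (HI : 0 < INR (S j)) by (apply lt_0_INR; auto with arith).
  apply (Rmult_lt_compat_l (INR (S j))) in Hn1; auto.
  rewrite Rinv_r in Hn1 by lra.
  assert (INR (S j) * (Rabs d / 4) = INR (S j) * Rabs d / 4) by (field).
  lra.
Qed.

Section Main.
Variable X : Type.
Variable tX : topology X.
Variable Y : X -> Prop.
Variable N : Type.
Variable Nw : N -> {x | Y x} -> Prop.
Hypothesis Hnw : network (subspace tX Y) Nw.
Variable BZ : Type.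
Variable tZ : topology BZ.
Variable e : {x | Y x} -> BZ.
Hypothesis Hsc : stone_cech (subspace tX Y) tZ e.
Variable K : Type.
Variable Fam : K -> BZ -> Prop.
Hypothesis Hnag : nagami_family tZ e Fam.

Definition Valid (pr : N * N) (O : BZ -> Prop) :=
  is_open tZ O /\ (forall y, Nw (fst pr) y -> O (e y)) /\
  (forall y, Nw (snd pr) y -> exists V, is_open tZ V /\ V (e y) /\ forall z, V z -> ~ O z).
Definition Ofam pr := epsilon (inhabits (fun _ : BZ => True)) (Valid pr).
Definition W (lp : list (N * N)) (z : BZ) := forall pr, In pr lp -> Ofam pr z.
Definition CA (A : list K) (z : BZ) := forall k, In k A -> Fam k z.
Definition bnd (f : {x | Y x} -> R) (j : nat) (zz : Z) y := Rabs (INR (S j) * f y - IZR zz) < 2.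

Lemma W_open lp : (forall pr, In pr lp -> Valid pr (Ofam pr)) -> is_open tZ (W lp).
Proof.
  induction lp as [|a l IH]; intros H.
  - apply (open_ext tZ (fun _ => True)); [|apply open_full].
    intros z; unfold W; simpl; split; [intros _ pr []|auto].
  - apply (open_ext tZ (fun z => Ofam a z /\ W l z)).
    + intros z; unfold W; simpl; split.
      * intros [H1 H2] pr [<-|Hp]; auto.
      * intros H'; split; auto.
    + apply open_inter.
      * apply (H a (or_introl eq_refl)).
      * apply IH; intros pr Hp; apply H; right; auto.
Qed.

Lemma sep yp yq : yp <> yq -> exists pr, Nw (fst pr) yp /\ Nw (snd pr) yq /\ Valid pr (Ofam pr).
Proof.
  intros Hne. destruct Hsc as [_ [Hh [Hi [Hc _]]]].
  assert (Hne' : e yp <> e yq) by (intros E; apply Hne, Hi, E).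
  destruct (Hh _ _ Hne') as [U [V [HU [HV [HUp [HVq Hd]]]]]].
  destruct (Hnw (fun x => U (e x)) yp (Hc U HU) HUp) as [n1 [Hn1 Hn1']].
  destruct (Hnw (fun x => V (e x)) yq (Hc V HV) HVq) as [n2 [Hn2 Hn2']].
  exists (n1, n2); simpl; split; [auto|split; [auto|]].
  unfold Ofam; apply epsilon_spec. exists U. split; [auto|split].
  - simpl; auto.
  - simpl. intros y Hy. exists V. split; [auto|split; [auto|]].
    intros z Hz HUz. apply (Hd z); auto.
Qed.

Lemma step3 (f : {x | Y x} -> R) (Hf : continuous_R (subspace tX Y) f) j y0 yp zp :
  Rabs (INR (S j) * f yp - IZR zp) <= 1 ->
  exists A lp, (forall k, In k A -> Fam k (e y0)) /\ (forall pr, In pr lp -> Valid pr (Ofam pr)) /\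
    W lp (e yp) /\ forall y, CA A (e y) -> W lp (e y) -> bnd f j zp y.
Proof.
  intros Hzp. destruct Hsc as [Hcomp [_ [_ [_ [Hemb _]]]]]. destruct Hnag as [Hcl Hng].
  set (Fc := fun S : BZ -> Prop => is_open tZ S /\
     ((forall y, S (e y) -> bnd f j zp y) \/
      (exists k, Fam k (e y0) /\ forall z, S z -> ~ Fam k z) \/
      (exists pr, (Valid pr (Ofam pr) /\ Nw (fst pr) yp) /\ forall z, S z -> ~ Ofam pr z))).
  destruct (Hcomp Fc) as [l [Hl Hlc]].
  - intros U [HU _]; exact HU.
  - intros z.
    destruct (classic (exists k, Fam k (e y0) /\ ~ Fam k z)) as [[k [Hk1 Hk2]]|Hnk].
    + exists (fun x => ~ Fam k x). split; [split; [apply Hcl|right; left; exists k; auto]|auto].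
    + destruct (classic (exists y', e y' = z)) as [[yq Hq]|Hno].
      2:{ exfalso; apply Hnk; apply (Hng y0 z Hno). }
      subst z. destruct (classic (bnd f j zp yq)) as [Hb|Hb].
      * assert (HO := Hf _ (R_open_lin (INR (S j)) (IZR zp) 2 (lt_0_INR _ (PeanoNat.Nat.lt_0_succ j)))).
        destruct (Hemb _ HO) as [U [HU HUe]].
        exists U. split; [split; [auto|left]|].
        -- intros y Hy. apply HUe in Hy. exact Hy.
        -- apply HUe. exact Hb.
      * assert (Hne : yp <> yq) by (intros E; subst; apply Hb; unfold bnd; lra).
        destruct (sep yp yq Hne) as [pr [H1 [H2 H3]]].
        destruct H3 as [HO1 [HO2 HO3]].
        destruct (HO3 yq H2) as [V [HV [HVq HVd]]].
        exists V. split; [split; [auto|right; right; exists pr; split; [split; [repeat split; auto|auto]|auto]]|auto].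
  - assert (Hex : forall l', (forall S, In S l' -> Fc S) ->
      exists A lp, (forall k, In k A -> Fam k (e y0)) /\
        (forall pr, In pr lp -> Valid pr (Ofam pr) /\ Nw (fst pr) yp) /\
        forall S, In S l' -> (forall y, S (e y) -> bnd f j zp y) \/
          (exists k, In k A /\ forall z, S z -> ~ Fam k z) \/
          (exists pr, In pr lp /\ forall z, S z -> ~ Ofam pr z)).
    { induction l' as [|S l' IH]; intros Hl'.
      - exists nil, nil. split; [intros k []|split; [intros pr []|intros S []]].
      - destruct IH as [A [lp [HA [Hlp HS]]]]. { intros S' HS'; apply Hl'; right; auto. }
        destruct (Hl' S (or_introl eq_refl)) as [_ [H1|[[k [Hk1 Hk2]]|[pr [Hpr1 Hpr2]]]]].
        + exists A, lp. split; auto. split; auto.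
          intros S' [<-|HS']; auto.
        + exists (k :: A), lp. split; [intros k' [<-|Hk']; auto|split; auto].
          intros S' [<-|HS'].
          * right; left; exists k; split; [left|]; auto.
          * destruct (HS S' HS') as [H|[[k' [H1 H2]]|H]]; auto.
            right; left; exists k'; split; [right|]; auto.
        + exists A, (pr :: lp). split; auto. split; [intros pr' [<-|Hp']; auto|].
          intros S' [<-|HS'].
          * right; right; exists pr; split; [left|]; auto.
          * destruct (HS S' HS') as [H|[H|[pr' [H1 H2]]]]; auto.
            right; right; exists pr'; split; [right|]; auto. }
    destruct (Hex l Hl) as [A [lp [HA [Hlp HS]]]].
    exists A, lp. split; auto. split; [intros pr Hp; apply Hlp; auto|split].
    + intros pr Hp. destruct (Hlp pr Hp) as [[_ [H _]] H']. apply H; auto.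
    + intros y HCA HW. destruct (Hlc (e y)) as [S [HSl HSy]].
      destruct (HS S HSl) as [H|[[k [Hk1 Hk2]]|[pr [Hp1 Hp2]]]].
      * apply H; auto.
      * exfalso; apply (Hk2 _ HSy); apply HCA; auto.
      * exfalso; apply (Hp2 _ HSy); apply HW; auto.
Qed.


Definition GoodL (f : {x | Y x} -> R) (A : list K) (j : nat) (L : list (list (N * N) * Z)) :=
  (forall y, CA A (e y) -> exists d, In d L /\ W (fst d) (e y)) /\
  (forall y, CA A (e y) -> forall d, In d L -> W (fst d) (e y) -> bnd f j (snd d) y).

Lemma exist_good (f : {x | Y x} -> R) (Hf : continuous_R (subspace tX Y) f) j y0 :
  exists A, CA A (e y0) /\ exists L, GoodL f A j L.
Proof.
  destruct Hsc as [Hcomp _]. destruct Hnag as [Hcl Hng].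
  set (G := fun S : BZ -> Prop => is_open tZ S /\
     ((exists k, Fam k (e y0) /\ forall z, S z -> ~ Fam k z) \/
      (exists A lp zz, (forall k, In k A -> Fam k (e y0)) /\
          (forall y, CA A (e y) -> W lp (e y) -> bnd f j zz y) /\ forall z, S z -> W lp z))).
  destruct (Hcomp G) as [l [Hl Hlc]].
  - intros U [HU _]; exact HU.
  - intros z.
    destruct (classic (exists k, Fam k (e y0) /\ ~ Fam k z)) as [[k [Hk1 Hk2]]|Hnk].
    + exists (fun x => ~ Fam k x). split; [split; [apply Hcl|left; exists k; auto]|auto].
    + destruct (classic (exists y', e y' = z)) as [[yp Hp]|Hno].
      2:{ exfalso; apply Hnk; apply (Hng y0 z Hno). }
      subst z.
      set (r := INR (S j) * f yp).
      destruct (archimed r) as [Ha1 Ha2].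
      assert (Hzp : Rabs (r - IZR (up r)) <= 1).
      { unfold Rabs; destruct Rcase_abs; lra. }
      destruct (step3 f Hf j y0 yp (up r) Hzp) as [A [lp [HA [Hlp [HWp Hb]]]]].
      exists (W lp). split; [split; [apply W_open; auto|right; exists A, lp, (up r); auto]|auto].
  - assert (Hex : forall l', (forall S, In S l' -> G S) ->
      exists A0 L, (forall k, In k A0 -> Fam k (e y0)) /\
        (forall d, In d L -> exists A', (forall k, In k A' -> In k A0) /\
            forall y, CA A' (e y) -> W (fst d) (e y) -> bnd f j (snd d) y) /\
        forall S, In S l' -> (exists k, In k A0 /\ forall z, S z -> ~ Fam k z) \/
          (exists d, In d L /\ forall z, S z -> W (fst d) z)).
    { induction l' as [|S l' IH]; intros Hl'.
      - exists nil, nil. split; [intros k []|split; [intros d []|intros S []]].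
      - destruct IH as [A0 [L [HA [HL HS]]]]. { intros S' HS'; apply Hl'; right; auto. }
        destruct (Hl' S (or_introl eq_refl)) as [_ [[k [Hk1 Hk2]]|[A [lp [zz [H1 [H2 H3]]]]]]].
        + exists (k :: A0), L. split; [intros k' [<-|Hk']; auto|split].
          * intros d Hd. destruct (HL d Hd) as [A' [HA' HA'']]. exists A'; split; auto.
            intros k' Hk'; right; auto.
          * intros S' [<-|HS'].
            -- left; exists k; split; [left|]; auto.
            -- destruct (HS S' HS') as [[k' [Ha Hb]]|H]; auto.
               left; exists k'; split; [right|]; auto.
        + exists (A ++ A0), ((lp, zz) :: L). split.
          { intros k Hk. apply in_app_or in Hk as [Hk|Hk]; auto. }
          split.
          * intros d [<-|Hd].
            -- exists A. split; [intros k Hk; apply in_or_app; left; auto|]. simpl; auto.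
            -- destruct (HL d Hd) as [A' [HA' HA'']]. exists A'; split; auto.
               intros k' Hk'; apply in_or_app; right; auto.
          * intros S' [<-|HS'].
            -- right; exists (lp, zz); split; [left|]; auto.
            -- destruct (HS S' HS') as [[k' [Ha Hb]]|[d [Hd1 Hd2]]].
               ++ left; exists k'; split; [apply in_or_app; right|]; auto.
               ++ right; exists d; split; [right|]; auto. }
    destruct (Hex l Hl) as [A0 [L [HA [HL HS]]]].
    exists A0. split; [intros k Hk; apply HA; auto|].
    exists L. split.
    + intros y HCA. destruct (Hlc (e y)) as [S [HSl HSy]].
      destruct (HS S HSl) as [[k [Hk1 Hk2]]|[d [Hd1 Hd2]]].
      * exfalso; apply (Hk2 _ HSy); apply HCA; auto.
      * exists d; split; auto.
    + intros y HCA d Hd HW. destruct (HL d Hd) as [A' [HA' HA'']].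
      apply HA''; auto. intros k Hk; apply HCA; auto.
Qed.

Definition Enc (f : {x | Y x} -> R) (a : list K * nat) : option (list (list (N * N) * Z)) :=
  match excluded_middle_informative (exists L, GoodL f (fst a) (snd a) L) with
  | left H => Some (proj1_sig (constructive_indefinite_description _ H))
  | right _ => None end.

Lemma Enc_good f a L : Enc f a = Some L -> GoodL f (fst a) (snd a) L.
Proof.
  unfold Enc. destruct excluded_middle_informative as [H|H]; [|discriminate].
  intros E; injection E as E. rewrite <- E. destruct constructive_indefinite_description; auto.
Qed.

Lemma Enc_inj (f1 f2 : {x | Y x} -> R) :
  continuous_R (subspace tX Y) f1 -> continuous_R (subspace tX Y) f2 ->
  Enc f1 = Enc f2 -> forall y, f1 y = f2 y.
Proof.
  intros H1 H2 E y0.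
  assert (D : forall j, INR (S j) * Rabs (f1 y0 - f2 y0) < 4).
  { intros j. destruct (exist_good f1 H1 j y0) as [A [HA [L HL]]].
    assert (Hs : exists L', Enc f1 (A, j) = Some L').
    { unfold Enc. destruct excluded_middle_informative as [H|H]; [eauto|].
      exfalso; apply H; eauto. }
    destruct Hs as [L' HL'].
    pose proof (Enc_good f1 _ _ HL') as [G1 G1'].
    rewrite E in HL'. pose proof (Enc_good f2 _ _ HL') as [G2 G2'].
    simpl in *.
    destruct (G1 y0 HA) as [d [Hd HWd]].
    specialize (G1' y0 HA d Hd HWd). specialize (G2' y0 HA d Hd HWd).
    unfold bnd in *.
    assert (HI : 0 < INR (S j)) by (apply lt_0_INR; auto with arith).
    assert (Hk : Rabs (INR (S j) * (f1 y0 - f2 y0)) < 4).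
    { replace (INR (S j) * (f1 y0 - f2 y0)) with
        ((INR (S j) * f1 y0 - IZR (snd d)) - (INR (S j) * f2 y0 - IZR (snd d))) by ring.
      revert G1' G2'. generalize (INR (S j) * f1 y0 - IZR (snd d)), (INR (S j) * f2 y0 - IZR (snd d)).
      intros a b Ha Hb. unfold Rabs in *. repeat destruct Rcase_abs; lra. }
    rewrite Rabs_mult, (Rabs_right (INR (S j))) in Hk by lra. exact Hk. }
  apply Rminus_diag_uniq. apply small_eq; auto.
Qed.

End Main.

Lemma restr_inj (X : Type) (tX : topology X) (Y : X -> Prop) (Hd : dense tX Y) (f1 f2 : CX tX) :
  (forall y : {x | Y x}, proj1_sig f1 (proj1_sig y) = proj1_sig f2 (proj1_sig y)) -> f1 = f2.
Proof.
  intros H. apply sig_eq. destruct f1 as [f1 c1], f2 as [f2 c2]; simpl in *.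
  apply functional_extensionality; intro x.
  destruct (Req_dec (f1 x) (f2 x)) as [E|E]; auto. exfalso.
  set (d := Rabs (f1 x - f2 x)).
  assert (Hdp : 0 < d) by (apply Rabs_pos_lt; lra).
  assert (O1 := c1 _ (R_open_lin 1 (f1 x) (d / 2) Rlt_0_1)).
  assert (O2 := c2 _ (R_open_lin 1 (f2 x) (d / 2) Rlt_0_1)).
  destruct (Hd _ (open_inter X tX _ _ O1 O2)) as [y [Hy [U1 U2]]].
  - exists x. simpl. replace (1 * f1 x - f1 x) with 0 by ring. replace (1 * f2 x - f2 x) with 0 by ring.
    rewrite Rabs_R0. lra.
  - simpl in U1, U2. specialize (H (exist _ y Hy)). simpl in H.
    rewrite H in U1. unfold d in *. revert U1 U2.
    replace (1 * f2 y - f1 x) with (f2 y - f1 x) by ring.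
    replace (1 * f2 y - f2 x) with (f2 y - f2 x) by ring.
    unfold Rabs; repeat destruct Rcase_abs; lra.
Qed.

Lemma restr_cont (X : Type) (tX : topology X) (Y : X -> Prop) (f : CX tX) :
  continuous_R (subspace tX Y) (fun y => proj1_sig f (proj1_sig y)).
Proof.
  intros U HU. simpl. exists (fun x => U (proj1_sig f x)). split.
  - apply (proj2_sig f); auto.
  - intros y; tauto.
Qed.

Lemma base_of_inj (X : Type) (tX : topology X) (I : Type) (inj : CX tX -> I) :
  completely_regular tX -> (forall f g, inj f = inj g -> f = g) ->
  exists Bs : I -> X -> Prop, base tX Bs.
Proof.
  intros Hcr Hi.
  exists (fun i => fun x => exists U, (exists f : CX tX, inj f = i /\ U = (fun x => proj1_sig f x < / 2)) /\ U x).
  split.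
  - intros i. apply open_union. intros U [f [_ ->]].
    apply (proj2_sig f (fun r => r < / 2)). apply R_open_lt.
  - intros U x HU Ux.
    assert (Hc : is_closed tX (fun x => ~ U x)).
    { unfold is_closed. apply (open_ext tX U); auto. intros z; split; [tauto|apply NNPP]. }
    destruct (Hcr x _ Hc (fun H => H Ux)) as [f [Hf [Hr [Hx H1]]]].
    set (fc := exist _ f Hf : CX tX).
    exists (inj fc). split.
    + exists (fun x => proj1_sig fc x < / 2). split; [exists fc; auto|]. simpl. rewrite Hx. lra.
    + intros y [V [[f' [E ->]] Hy]]. apply Hi in E. subst f'. simpl in Hy.
      apply NNPP; intros Hn. rewrite (H1 y Hn) in Hy. lra.
Qed.

Theorem theorem2 :
  forall (X : Type) (tX : topology X), tychonoff tX ->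
  forall (Y : X -> Prop), dense tX Y ->
  forall (N : Type) (Nw : N -> {x | Y x} -> Prop),
    infinite_type N -> network (subspace tX Y) Nw ->
  forall (Z : Type) (tZ : topology Z) (e : {x | Y x} -> Z),
    stone_cech (subspace tX Y) tZ e ->
  forall (K : Type) (Fam : K -> Z -> Prop),
    infinite_type K -> nagami_family tZ e Fam ->
  (exists inj : CX tX -> (K -> N), forall f g, inj f = inj g -> f = g) /\
  (exists Bs : (K -> N) -> X -> Prop, base tX Bs).
Proof.
  intros X tX Htych Y Hd N Nw [gN gNi] Hnw Z0 tZ e Hsc K Fam [gK gKi] Hnag.
  destruct (codeK K gK gKi) as [iK HiK].
  destruct (codeN N gN gNi) as [iN HiN].
  destruct (lift_fun _ _ K N iK iN (gN 0%nat) HiK HiN) as [F HF].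
  assert (Hinj : exists inj : CX tX -> (K -> N), forall f g, inj f = inj g -> f = g).
  { exists (fun f => F (Enc X Y N Nw Z0 tZ e K Fam (fun y => proj1_sig f (proj1_sig y)))).
    intros f1 f2 E. apply HF in E. apply (restr_inj X tX Y Hd).
    exact (Enc_inj X tX Y N Nw Hnw Z0 tZ e Hsc K Fam Hnag _ _ (restr_cont X tX Y f1) (restr_cont X tX Y f2) E). }
  split; auto.
  destruct Hinj as [inj Hi]. apply (base_of_inj X tX _ inj); auto. destruct Htych; auto.
Qed.
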